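(* Let $\Gamma=\bigcup_i\gamma_i$ be an admissible finite collection of transverse unobstructed curves in $\Sigma$ and let $u\in C_2^+(\Sigma;\mathbb{R})$. Then $(u+H_{\mathbb{R}})\cap C_2^+(\Sigma;\mathbb{R})$ is compact.
   Context: $\Sigma$ is a closed oriented surface of genus at least two; unobstructed curves are oriented immersed closed curves whose lifts to the universal cover are properly embedded lines. $C=C_2(\Sigma;\mathbb{Z})$ is the free $\mathbb{Z}$-module with basis the connected components of $\Sigma\setminus\Gamma$, $C_2(\Sigma;\mathbb{R})=C\otimes\mathbb{R}$, and $C_2^+(\Sigma;\mathbb{R})$ is the cone of elements with all coordinates nonnegative. The Euler measure $e(S)$ of a surface with corners is $\frac{1}{2\pi}$ times the integral of the curvature of a metric for which the boundary is geodesic and corners are right angles; it extends to a linear form $e$ on $C$. $H\subset C$ is the subgroup of $2$-chains in $\ker e$ whose boundary is a linear combination of the $\gamma_i$, and $H_{\mathbb{R}}$ is its $\mathbb{R}$-span. $\Gamma$ is admissible iff every nonzero $b\in H$ has both positive and negative coordinates. *)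

(* Defs.v *)
From HB Require Import structures.
From mathcomp Require Import all_boot all_order all_algebra.
From mathcomp Require Import all_classical all_reals all_analysis.
Set Implicit Arguments. Unset Strict Implicit. Unset Printing Implicit Defensive.
Import Order.TTheory GRing.Theory Num.Theory.
Local Open Scope ring_scope.
Local Open Scope classical_set_scope.

(* Combinatorial data extracted from a collection Gamma of transverse curves:
   - the n connected components (faces) of Sigma \ Gamma, indexed by 'I_n;
     a 2-chain in C = C_2(Sigma;Z) is a row vector c : 'rV[int]_n;
   - the m edges (oriented arcs between consecutive crossings) of the graph
     Gamma, indexed by 'I_m; a 1-chain is a function 'I_m -> int;
   - euler f : rat  = the Euler measure e of the face f;
   - bd f x : int  = coefficient of the edge x in the boundary of the face f
     (so the boundary of c is  x |-> \sum_f c_f * bd f x);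
   - gam l x : int = coefficient of the edge x in the 1-chain gamma_l. *)

Definition euler_of (n : nat) (euler : 'I_n -> rat) (c : 'rV[int]_n) : rat :=
  \sum_(f < n) (c ord0 f)%:~R * euler f.

Definition boundary_of (n m : nat) (bd : 'I_n -> 'I_m -> int)
  (c : 'rV[int]_n) (x : 'I_m) : int :=
  \sum_(f < n) c ord0 f * bd f x.

Definition Hgrp (n m k : nat) (euler : 'I_n -> rat) (bd : 'I_n -> 'I_m -> int)
  (gam : 'I_k -> 'I_m -> int) : set 'rV[int]_n :=
  [set c | euler_of euler c = 0 /\
           exists a : 'I_k -> int,
             forall x : 'I_m, boundary_of bd c x = \sum_(l < k) a l * gam l x].

Definition HR (R : realType) (n : nat) (H : set 'rV[int]_n) : set 'rV[R]_n :=
  [set v | exists (p : nat) (r : 'I_p -> R) (b : 'I_p -> 'rV[int]_n),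
             (forall j, H (b j)) /\
             v = \sum_(j < p) r j *: map_mx (fun z : int => z%:~R) (b j)].

Definition C2plus (R : realType) (n : nat) : set 'rV[R]_n :=
  [set v | forall f : 'I_n, 0 <= v ord0 f].

Definition admissible (n : nat) (H : set 'rV[int]_n) : Prop :=
  forall b, H b -> b != 0 ->
    (exists f : 'I_n, 0 < b ord0 f) /\ (exists f : 'I_n, b ord0 f < 0).

(* Main.v *)
Require Import Defs.
From HB Require Import structures.
From mathcomp Require Import all_boot all_order all_algebra.
From mathcomp Require Import all_classical all_reals all_analysis.
From mathcomp Require Import ring lra.
Import Order.TTheory GRing.Theory Num.Theory.
Import numFieldNormedType.Exports.
Local Open Scope ring_scope.
Local Open Scope classical_set_scope.

Lemma H_mul (n m k p : nat) (euler : 'I_n -> rat) (bd : 'I_n -> 'I_m -> int)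
  (gam : 'I_k -> 'I_m -> int) (B : 'M[int]_(p, n)) (y : 'rV[int]_p) :
  (forall j, Hgrp euler bd gam (row j B)) -> Hgrp euler bd gam (y *m B).
Proof.
move=> HB.
have /fin_all_exists [a Ha] : forall j, exists a : 'I_k -> int,
    forall x, boundary_of bd (row j B) x = \sum_(l < k) a l * gam l x.
  by move=> j; case: (HB j).
split.
- rewrite /euler_of.
  rewrite (eq_bigr (fun f => \sum_j (y ord0 j)%:~R * ((B j f)%:~R * euler f))); last first.
    move=> f _; rewrite mxE mulrz_sumr mulr_suml; apply: eq_bigr => j _.
    by rewrite intrM mulrA.
  rewrite exchange_big /= big1 // => j _.
  rewrite -mulr_sumr; have [+ _] := HB j; rewrite /euler_of.
  under eq_bigr do rewrite mxE.
  by move->; rewrite mulr0.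
- exists (fun l => \sum_j y ord0 j * a j l) => x.
  rewrite /boundary_of.
  rewrite (eq_bigr (fun f => \sum_j y ord0 j * (B j f * bd f x))); last first.
    move=> f _; rewrite mxE mulr_suml; apply: eq_bigr => j _.
    by rewrite mulrA.
  rewrite exchange_big /=.
  rewrite (eq_bigr (fun j => \sum_l y ord0 j * (a j l * gam l x))); last first.
    move=> j _; rewrite -mulr_sumr -Ha /boundary_of.
    by rewrite mulr_sumr; apply: eq_bigr => f _; rewrite mxE.
  rewrite exchange_big /=; apply: eq_bigr => l _.
  by rewrite mulr_suml; apply: eq_bigr => j _; rewrite mulrA.
Qed.

Definition mxR (R : realType) {p n} (B : 'M[int]_(p, n)) : 'M[R]_(p, n) :=
  map_mx (fun z : int => z%:~R) B.

Lemma HR_basis (R : realType) n (H : set 'rV[int]_n) :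
  exists p (B : 'M[int]_(p, n)), (forall j, H (row j B)) /\
    forall v : 'rV[R]_n, @HR R n H v <-> (v <= mxR R B)%MS.
Proof.
pose P r := `[< exists p (B : 'M[int]_(p, n)),
   (forall j, H (row j B)) /\ \rank (mxR R B) = r >].
have exP : exists r, P r.
  exists 0%N; apply/asboolP; exists 0%N, 0; split; first by case.
  by rewrite /mxR map_mx0 mxrank0.
have ubP : forall r, P r -> (r <= n)%N.
  by move=> r /asboolP [p [B [_ <-]]]; apply: rank_leq_col.
case: (ex_maxnP exP ubP) => r /asboolP [p [B [HB rB]]] maxr.
exists p, B; split => // v; split.
- case=> q [c [b [Hb ->]]]; apply: summx_sub => j _; apply: scalemx_sub.
  pose B' := col_mx B (b j).
  have HB' : forall i, H (row i B').
    move=> i; case: (split_ordP i) => i' ->.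
      by rewrite /B' rowKu.
    rewrite /B' rowKd ord1; suff -> : row ord0 (b j) = b j by [].
    by apply/matrixP => a0 c0; rewrite !mxE ord1 (ord1 a0).
  have Pr' : P (\rank (mxR R B')) by apply/asboolP; exists (p + 1)%N, B'.
  have := maxr _ Pr'.
  have sBB' : (mxR R B <= mxR R B')%MS.
    have e : mxR R B = row_mx 1%:M 0 *m col_mx (mxR R B) (mxR R (b j)).
      by rewrite mul_row_col mul1mx mul0mx addr0.
    by rewrite {1}e /B' /mxR map_col_mx; exact: submxMl.
  have [le1 eqC] := mxrank_leqif_sup sBB' => le2.
  have : (\rank (mxR R B) == \rank (mxR R B')) by rewrite eqn_leq le1 rB le2.
  rewrite eqC /B' /mxR map_col_mx col_mx_sub => /andP[_].
  by [].
- move/submxP => [D ->].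
  exists p, (fun j => D ord0 j), (fun j => row j B); split => //.
  by rewrite mulmx_sum_row; apply: eq_bigr => j _; rewrite /mxR map_row.
Qed.

Lemma fin_pos_lb (R : realType) (I : finType) (a : I -> R) :
  (forall i, 0 < a i) -> exists e : R, 0 < e /\ forall i, e <= a i.
Proof.
move=> apos.
suff [e [e0 eP]] : exists e : R, 0 < e /\ forall i, i \in enum I -> e <= a i.
  by exists e; split => // i; apply: eP; rewrite mem_enum.
elim: (enum I) => [|x s [e [e0 eP]]]; first by exists 1; split.
exists (Order.min e (a x)); split; first by rewrite lt_min e0 apos.
move=> i; rewrite inE => /orP[/eqP ->|iis]; first by rewrite ge_min lexx orbT.
by rewrite ge_min eP.

Qed.

Lemma int_scale p (y : 'rV[rat]_p) : exists (d : int) (yZ : 'rV[int]_p),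
  0 < d /\ map_mx (fun z : int => z%:~R : rat) yZ = d%:~R *: y.
Proof.
exists (\prod_j denq (y ord0 j)).
exists (\row_j ((\prod_(l | l != j) denq (y ord0 l)) * numq (y ord0 j))).
split; first by apply: prodr_gt0 => j _; exact: denq_gt0.
apply/matrixP => a j; rewrite (ord1 a) !mxE intrM numqE [in RHS](bigD1 j) //=.
rewrite intrM; ring.
Qed.

Lemma no_nonneg (R : realType) n p (H : set 'rV[int]_n) (B : 'M[int]_(p, n)) :
  admissible H -> (forall y : 'rV[int]_p, H (y *m B)) ->
  forall s : 'rV[R]_p, (forall i, 0 <= (s *m mxR R B) ord0 i) ->
  s *m mxR R B = 0.
Proof.
move=> adm HZ s.
set w := s *m mxR R B => w_ge0.
case: (pselect (exists i0, 0 < w ord0 i0)) => [[i0 wi0]|nex]; last first.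
  apply/matrixP => a i; rewrite (ord1 a) [RHS]mxE; apply/eqP.
  rewrite eq_le w_ge0 andbT leNgt; apply/negP => h; apply: nex; exists i.
  by [].
exfalso.
pose BQ : 'M[rat]_(p, n) := map_mx (fun z : int => z%:~R) B.
have BRQ : mxR R B = map_mx ratr BQ.
  by apply/matrixP => a b; rewrite !mxE ratr_int.
pose D : 'M[rat]_n := \matrix_(i, j) ((i == j) && (w ord0 i == 0))%:R.
pose N := BQ *m D.
have sN : s *m map_mx ratr N = 0.
  rewrite map_mxM -BRQ mulmxA -/w; apply/matrixP => a j.
  rewrite !mxE (bigD1 j) //= big1 ?addr0; last first.
    by move=> i /negPf ij; rewrite !mxE ij /= ratr_nat mulr0.
  rewrite !mxE eqxx /= (ord1 a); case: eqP => [->|_]; first by rewrite mul0r.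
  by rewrite ratr_nat mulr0.
have : (s <= kermx (map_mx ratr N))%MS by apply/sub_kermxP.
rewrite -map_kermx => /submxP [t st].
pose G := kermx N *m BQ.
have wG : w = t *m map_mx ratr G by rewrite /w st BRQ -mulmxA -map_mxM.
pose C i := \sum_j `|(map_mx ratr G : 'M[R]_(p, n)) j i|.
have C0 i : 0 <= C i by apply: sumr_ge0 => j _.
have C1 i : 0 < C i + 1 by have := C0 i; lra.
have [e [e0 eP]] : exists e : R, 0 < e /\
    forall i, 0 < w ord0 i -> e * (C i + 1) <= w ord0 i.
  have ap : forall i : 'I_n,
      0 < (fun i => if 0 < w ord0 i then w ord0 i / (C i + 1) else 1) i.
    by move=> i /=; case: ifP => // wi; rewrite divr_gt0.
  have [e [e0 eP]] := @fin_pos_lb R _ _ ap.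
  exists e; split => // i wi; have := eP i; rewrite wi.
  by rewrite ler_pdivlMr.
have /fin_all_exists [q qP] : forall j : 'I_p, exists q : rat,
    `|ratr q - t ord0 j| < e.
  move=> j; have [q] := @rat_in_itvoo R (t ord0 j - e) (t ord0 j + e)
    ltac:(lra).
  by rewrite in_itv /= => h; exists q; rewrite ltr_distl.
pose tQ : 'rV[rat]_p := \row_j q j.
pose yQ := tQ *m kermx N.
pose wQ := yQ *m BQ.
have wQD : wQ *m D = 0.
  rewrite /wQ /yQ; move: (mulmx_ker N); rewrite /N; move: (kermx _) => K KN.
  by rewrite -!mulmxA KN mulmx0.
have wQ0 i : w ord0 i = 0 -> wQ ord0 i = 0.
  move=> wi; have Dii : D i i = 1 by rewrite /D mxE eqxx wi eqxx.
  have Dli l : l != i -> D l i = 0 by move=> li; rewrite /D mxE (negPf li).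
  have := congr1 (fun M : 'M[rat]_(1, n) => M ord0 i) wQD; rewrite mxE [RHS]mxE.
  rewrite (bigD1 i) //= big1 ?addr0; last first.
    by move=> l li; rewrite Dli // mulr0.
  by rewrite Dii mulr1.
have wQpos i : 0 < w ord0 i -> 0 < wQ ord0 i.
  move=> wi; rewrite -(ltr0q R).
  have -> : ratr (wQ ord0 i) = (map_mx (@ratr R) tQ *m map_mx (@ratr R) G) ord0 i.
    by rewrite -map_mxM /wQ /yQ /G -mulmxA [RHS]mxE.
  have hd : `|(map_mx (@ratr R) tQ *m map_mx (@ratr R) G) ord0 i - w ord0 i| <= e * C i.
    rewrite wG /C !mxE -sumrB mulr_sumr.
    apply: le_trans (ler_norm_sum _ _ _) _; apply: ler_sum => j _.
    rewrite -mulrBl normrM ler_wpM2r // !mxE; apply: ltW; exact: qP.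
  have := eP i wi; move: hd; rewrite ler_distl => /andP[h1 _].
  have := C0 i; lra.
have wQge0 i : 0 <= wQ ord0 i.
  have := w_ge0 i; rewrite le_eqVlt => /orP[/eqP wi|wi].
    by rewrite wQ0.
  by apply: ltW; apply: wQpos.
have [d [yZ [d0 yZQ]]] := @int_scale p yQ.
pose z := yZ *m B.
have zQ : map_mx (fun x : int => x%:~R : rat) z = d%:~R *: wQ.
  by rewrite /z map_mxM yZQ -scalemxAl.
have zE i : (z ord0 i)%:~R = d%:~R * wQ ord0 i :> rat.
  by have := congr1 (fun M : 'M[rat]_(1, n) => M ord0 i) zQ; rewrite !mxE.
have zN0 : z != 0.
  apply/negP => /eqP z0; have := zE i0; rewrite z0 mxE => h.
  have : (0 : rat) < d%:~R * wQ ord0 i0 by rewrite mulr_gt0 ?ltr0z ?wQpos.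
  by rewrite -h ltr0z ltxx.
have [_ [f zf]] := adm z (HZ yZ) zN0.
have := wQge0 f; have dQ : (0 : rat) < d%:~R by rewrite ltr0z.
rewrite -(pmulr_rge0 _ dQ) -zE ler0z.
by rewrite leNgt zf.
Qed.

Lemma cont_sum (T : topologicalType) (R : realType) p (F : 'I_p -> T -> R) :
  (forall j, continuous (F j)) -> continuous (fun x => \sum_(j < p) F j x).
Proof.
elim: p F => [|p IH] F cF.
  have -> : (fun x => \sum_(j < 0) F j x) = (fun=> 0) by apply: funext => x; rewrite big_ord0.
  exact: cst_continuous.
have -> : (fun x => \sum_(j < p.+1) F j x) =
   (fun x => \sum_(j < p) F (widen_ord (leqnSn p) j) x + F ord_max x).
  by apply: funext => x; rewrite big_ord_recr.
move=> x; apply: (@continuousD R R^o T (fun x => \sum_(j < p) F (widen_ord (leqnSn p) j) x) (F ord_max)).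
  by apply: IH => j; apply: cF.
exact: cF.
Qed.

Lemma lin_cont (R : realType) n (c a : 'I_n -> R) :
  continuous (fun x : 'rV[R]_n => \sum_(i < n) (x ord0 i - c i) * a i).
Proof.
apply: cont_sum => i x.
apply: (@continuousM _ _ (fun x : 'rV[R]_n => x ord0 i - c i) (fun=> a i)); last first.
  exact: cst_continuous.
apply: (@continuousB _ _ _ (fun x : 'rV[R]_n => x ord0 i) (fun=> c i)).
  exact: coord_continuous.
exact: cst_continuous.
Qed.

Lemma closed_aff (R : realType) n q (M : 'M[R]_(n, q)) (c : 'rV[R]_n) :
  closed [set x : 'rV[R]_n | (x - c) *m M = 0].
Proof.
have -> : [set x : 'rV[R]_n | (x - c) *m M = 0] =
   \bigcap_(j in [set: 'I_q]) ((fun x : 'rV[R]_n => \sum_(i < n) (x ord0 i - c ord0 i) * M i j) @^-1` [set 0]).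
  apply/seteqP; split => x /=.
    move=> h j _ /=; have := congr1 (fun A : 'M[R]_(1, q) => A ord0 j) h.
    by rewrite !mxE => h0; rewrite -[RHS]h0; apply: eq_bigr => i _; rewrite !mxE.
  move=> h; apply/matrixP => a j; rewrite (ord1 a) !mxE -[RHS](h j I).
  by apply: eq_bigr => i _; rewrite !mxE.
apply: closed_bigI => j _.
apply: closed_comp; last exact: closed_eq.
move=> x _; exact: lin_cont.
Qed.

Lemma closed_C2plus (R : realType) n : closed (@C2plus R n).
Proof.
have -> : @C2plus R n = \bigcap_(i in [set: 'I_n]) ((fun x : 'rV[R]_n => x ord0 i) @^-1` [set y | 0 <= y]).
  by apply/seteqP; split => x /= h i //; [move=> _; apply: h | apply: h].
apply: closed_bigI => i _.
apply: closed_comp; last exact: closed_ge.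
move=> x _; exact: coord_continuous.
Qed.

Theorem proposition3p4 (R : realType) (n m k : nat)
  (euler : 'I_n -> rat) (bd : 'I_n -> 'I_m -> int) (gam : 'I_k -> 'I_m -> int)
  (u : 'rV[R]_n) :
  admissible (Hgrp euler bd gam) ->
  @C2plus R n u ->
  compact ([set u + h | h in @HR R n (Hgrp euler bd gam)] `&` @C2plus R n).
Proof.
move=> adm u0.
set H := Hgrp euler bd gam.
have [p [B [HB HRE]]] := @HR_basis R n H.
have HZ : forall y, H (y *m B) by move=> y; exact: H_mul.
have nn := @no_nonneg R n p H B adm HZ.
pose V := [set v : 'rV[R]_n | (v <= mxR R B)%MS].
have Vnn : forall v, V v -> (forall i, 0 <= v ord0 i) -> v = 0.
  by move=> v /submxP [D ->] h; exact: nn.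
have VE : forall v, V v <-> (v - 0) *m cokermx (mxR R B) = 0.
  by move=> v; rewrite /V /= submxE subr0; split => [/eqP|->].
have Vclosed : closed V.
  have -> : V = [set x | (x - 0) *m cokermx (mxR R B) = 0].
    by apply/seteqP; split => x /VE.
  exact: closed_aff.
have VZ a v : V v -> V (a *: v) by move=> h; rewrite /V /= scalemx_sub.
set K := _ `&` _.
have KE : K = [set x | (x - u) *m cokermx (mxR R B) = 0] `&` @C2plus R n.
  apply/seteqP; split => x /=.
    move=> [[h hH <-] xp]; split => //.
    by rewrite (addrC u) addrK -[h]subr0; apply/VE/HRE.
  move=> [hx xp]; split => //; exists (x - u); last by rewrite addrC subrK.
  by apply/HRE/VE; rewrite subr0.
apply: bounded_closed_compact; last first.
  by rewrite KE; apply: closedI; [exact: closed_aff | exact: closed_C2plus].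
suff [M0 hM0] : exists M0, forall x, K x -> `|x| <= M0.
  exists M0; split; first exact: num_real.
  move=> M hM x Kx; apply: le_trans (hM0 x Kx) _; exact: ltW.
have Kh : forall x, K x -> exists h, [/\ V h, x = u + h & forall i, 0 <= u ord0 i + h ord0 i].
  move=> x [[h hH <-] xp]; exists h; split => //; first exact/HRE.
  by move=> i; have := xp i; rewrite mxE.
pose S := V `&` [set h | `|h| = 1].
case: (pselect (S !=set0)) => [S0|S0]; last first.
  exists `|u| => x /Kh [h [hV -> _]].
  have -> : h = 0.
    case: (eqVneq h 0) => // hn; exfalso; apply: S0; exists (`|h|^-1 *: h); split.
      exact: VZ.
    by rewrite /= normrZ normfV normr_id mulVf // normr_eq0.
  by rewrite addr0.
have cS : compact S.
  apply: bounded_closed_compact.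
    exists 1; split; first exact: num_real.
    by move=> M hM x [_ /= ->]; exact: ltW.
  apply: closedI => //.
  apply: (@preimage_closed _ _ (@Num.norm _ [the normedZmodType R of 'rV[R]_n]) [set 1]); last exact: closed_eq.
  move=> x _; exact: norm_continuous.
pose f (h : 'rV[R]_n) := \sum_i (`|h ord0 i| - h ord0 i).
have fcont : continuous f.
  apply: cont_sum => i x.
  apply: (@continuousB _ _ _ (fun x : 'rV[R]_n => `|x ord0 i|) (fun x : 'rV[R]_n => x ord0 i)); last first.
    exact: coord_continuous.
  apply: (@continuous_comp _ _ _ (fun x : 'rV[R]_n => x ord0 i) Num.norm).
    exact: coord_continuous.
  exact: norm_continuous.
have [c Sc cmin] := EVT_min_rV S0 cS (continuous_subspaceT fcont).
have fge0 h : 0 <= f h by apply: sumr_ge0 => i _; rewrite subr_ge0 ler_norm.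
have [cV c1] : S c by rewrite inE in Sc.
have d0 : 0 < f c.
  rewrite lt_def fge0 andbT; apply/negP => /eqP fc0.
  have hF : forall i, true -> 0 <= `|c ord0 i| - c ord0 i.
    by move=> i _; rewrite subr_ge0 ler_norm.
  have h0 := psumr_eq0P hF fc0.
  have c0 : c = 0.
    apply: Vnn => // i; have := h0 i isT; move/eqP; rewrite subr_eq0 => /eqP <-.
    exact: normr_ge0.
  by have := eqxx c; rewrite {2}c0 -normr_eq0 c1 oner_eq0.
have fZ a (h : 'rV[R]_n) : 0 <= a -> f (a *: h) = a * f h.
  move=> a0; rewrite /f mulr_sumr; apply: eq_bigr => i _.
  by rewrite !mxE normrM (ger0_norm a0); ring.
have fub (h : 'rV[R]_n) : (forall i, 0 <= u ord0 i + h ord0 i) -> f h <= 2 * \sum_i u ord0 i.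
  move=> hp; rewrite /f mulr_sumr; apply: ler_sum => i _; have := hp i; have := u0 i.
  by case: (lerP 0 (h ord0 i)) => hi; [rewrite ger0_norm // | rewrite ltr0_norm //]; lra.
set su := \sum_i u ord0 i.
have su0 : 0 <= su by apply: sumr_ge0 => i _; exact: u0.
exists (`|u| + 2 * su / f c) => x /Kh [h [hV -> hp]].
apply: le_trans (ler_normD _ _) _; rewrite lerD2l.
case: (eqVneq h 0) => [->|hn]; first by rewrite normr0 divr_ge0 // mulr_ge0.
have nh0 : 0 < `|h| by rewrite normr_gt0.
have Sh : S (`|h|^-1 *: h).
  by split; [exact: VZ | rewrite /= normrZ normfV normr_id mulVf // normr_eq0].
have := cmin _ (mem_set Sh); rewrite fZ ?invr_ge0 ?normr_ge0 // => hle.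
have hle' : `|h| * f c <= f h.
  by have := ler_wpM2l (normr_ge0 h) hle; rewrite mulrA mulfV ?mul1r // gt_eqF.
have := fub h hp; rewrite -/su ler_pdivlMr //; lra.
Qed.
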